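(* Let $X$ be an infinite dimensional separable Banach space, let $T$ be a bounded linear operator on $X$ and let $\varepsilon\in(0,1)$. Let $\mathcal{D}_1$ be a dense subset of $X$. Let $\mathcal{D}_2$ be a subset of $X$ such that $\mathcal{D}_2\cap B(x,\varepsilon\|x\|)\neq\emptyset$ for all $x\in X\setminus\{0\}$. Let $(n(k))_k\subset\mathbb{N}$ be an increasing sequence and let $S_{n(k)}:\mathcal{D}_2\to X$ be maps such that: (1) $\lim_{k\to\infty}\|T^{n(k)}x\|=0$ for all $x\in\mathcal{D}_1$; (2) $\lim_{k\to\infty}\|S_{n(k)}y\|=0$ for all $y\in\mathcal{D}_2$; (3) $\lim_{k\to\infty}\|T^{n(k)}S_{n(k)}y-y\|=0$ for all $y\in\mathcal{D}_2$. Then $T$ satisfies the Hypercyclicity Criterion.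
   Context: $B(x,r)$ is the closed ball of center $x$ and radius $r$. $T$ satisfies the Hypercyclicity Criterion if there exist a sequence of integers $(m(k))_k$, two dense sets $\mathcal{E}_1,\mathcal{E}_2\subset X$ and maps $U_{m(k)}:\mathcal{E}_2\to X$ such that $T^{m(k)}x\to0$ for all $x\in\mathcal{E}_1$, $U_{m(k)}y\to0$ and $T^{m(k)}U_{m(k)}y\to y$ for all $y\in\mathcal{E}_2$. *)

(* Defs.v *)
From HB Require Import structures.
From mathcomp Require Import all_boot all_order all_algebra.
From mathcomp Require Import all_classical all_reals all_analysis.
Set Implicit Arguments. Unset Strict Implicit. Unset Printing Implicit Defensive.
Import Order.TTheory GRing.Theory Num.Theory.
Import numFieldNormedType.Exports.
Local Open Scope classical_set_scope.
Local Open Scope ring_scope.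

Definition separable (R : realType) (X : normedModType R) : Prop :=
  exists D : set X, countable D /\ dense D.

Definition finite_dimensional (R : realType) (X : normedModType R) : Prop :=
  exists s : seq X, forall x : X,
    exists c : nat -> R, x = \sum_(i < size s) c i *: s`_i.

Definition infinite_dimensional (R : realType) (X : normedModType R) : Prop :=
  ~ finite_dimensional X.

Definition cball (R : realType) (X : normedModType R) (x : X) (r : R) : set X :=
  [set y | `|x - y| <= r].

Definition hypercyclicity_criterion (R : realType) (X : normedModType R)
    (T : X -> X) : Prop :=
  exists (m : nat -> nat) (E1 E2 : set X) (U : nat -> X -> X),
    dense E1 /\ dense E2 /\
    (forall x, E1 x -> (fun k => iter (m k) T x) @ \oo --> (0 : X)) /\
    (forall y, E2 y -> (fun k => U k y) @ \oo --> (0 : X)) /\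
    (forall y, E2 y -> (fun k => iter (m k) T (U k y)) @ \oo --> y).

(* Main.v *)
Require Import Defs.
From HB Require Import structures.
From mathcomp Require Import all_boot all_order all_algebra.
From mathcomp Require Import all_classical all_reals all_analysis.
Import Order.TTheory GRing.Theory Num.Theory.
Import numFieldNormedType.Exports.
Local Open Scope classical_set_scope.
Local Open Scope ring_scope.

Section Aux.
Variables (R : realType) (X : normedModType R).

Fixpoint inD (D : set X) (s : seq X) : Prop :=
  match s with nil => True | d :: s' => D d /\ inD D s' end.

Lemma iter_sum (T : {linear X -> X}) m (s : seq X) (f : X -> X) :
  iter m T (\sum_(d <- s) f d) = \sum_(d <- s) iter m T (f d).
Proof.
elim: m => [//|m IH] /=; by rewrite IH raddf_sum.
Qed.

Lemma sum_cvg0 (D : set X) (S : nat -> X -> X) :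
  (forall y, D y -> (fun k => `|S k y|) @ \oo --> (0 : R)) ->
  forall s, inD D s -> (fun k => \sum_(d <- s) S k d) @ \oo --> (0 : X).
Proof.
move=> HS; elim => [_|d s IH [Dd Ds]].
  under eq_fun do rewrite big_nil. exact: cvg_cst.
under eq_fun do rewrite big_cons.
have := cvgD (norm_cvg0 (HS _ Dd)) (IH Ds). rewrite addr0. exact.
Qed.

Lemma sum_cvgT (D : set X) (S : nat -> X -> X) (g : nat -> X -> X) :
  (forall y, D y -> (fun k => `|g k (S k y) - y|) @ \oo --> (0 : R)) ->
  forall s, inD D s -> (fun k => \sum_(d <- s) g k (S k d)) @ \oo --> \sum_(d <- s) d.
Proof.
move=> HS; elim => [_|d s IH [Dd Ds]].
  under eq_fun do rewrite big_nil. rewrite big_nil; exact: cvg_cst.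
under eq_fun do rewrite big_cons. rewrite big_cons.
have H0 : (fun k => g k (S k d) - d) @ \oo --> (0:X) by exact: norm_cvg0 (HS _ Dd).
have := cvgD (proj1 (subr_cvg0 _ _) H0) (IH Ds). exact.
Qed.

End Aux.
Arguments inD {R X}.
Arguments iter_sum {R X}.
Arguments sum_cvg0 {R X D S}.
Arguments sum_cvgT {R X D S g}.

Theorem proposition5p1 (R : realType) (X : completeNormedModType R)
  (T : {linear X -> X}) (eps : R) (D1 D2 : set X) (n : nat -> nat)
  (S : nat -> X -> X) :
  separable X -> infinite_dimensional X -> continuous T ->
  0 < eps < 1 ->
  dense D1 ->
  (forall x : X, x != 0 -> D2 `&` cball x (eps * `|x|) !=set0) ->
  {homo n : a b / (a < b)%N} ->
  (forall x, D1 x -> (fun k => `|iter (n k) T x|) @ \oo --> (0 : R)) ->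
  (forall y, D2 y -> (fun k => `|S k y|) @ \oo --> (0 : R)) ->
  (forall y, D2 y -> (fun k => `|iter (n k) T (S k y) - y|) @ \oo --> (0 : R)) ->
  hypercyclicity_criterion T.
Proof.
move=> _ _ _ /andP[eps0 eps1] dD1 HD2 _ H1 H2 H3.
pose E2 := fun y : X => exists s, inD D2 s /\ y = \sum_(d <- s) d.
pose U := fun k (y : X) => if pselect (E2 y) is left h
  then \sum_(d <- projT1 (cid h)) S k d else 0.
exists n, D1, E2, U; split => //; split; last split; last split.
- move=> O [x Ox] oO.
  have : nbhs x O by apply: open_nbhs_nbhs; split.
  move=> /nbhs_normP [e /= e0 He].
  have approx : forall j, exists s, inD D2 s /\ `|x - \sum_(d <- s) d| <= eps ^+ j * `|x|.
    elim => [|j [s [Ds Hs]]].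
      by exists nil; rewrite big_nil subr0 expr0 mul1r.
    have [r0|rn0] := eqVneq (x - \sum_(d <- s) d) 0.
      exists s; split => //; rewrite r0 normr0.
      by rewrite mulr_ge0 ?normr_ge0 // exprn_ge0 // ltW.
    have [d [Dd Hd]] := HD2 _ rn0.
    exists (d :: s); split => //; rewrite big_cons.
    rewrite opprD addrA addrAC.
    apply: (le_trans Hd); rewrite exprS -mulrA ler_pM2l //.
  have ex1 : `|eps| < 1 by rewrite ger0_norm ?ltW.
  have x1 : 0 < `|x| + 1 by rewrite ltr_wpDl.
  have c0 : 0 < e / (`|x| + 1) by rewrite divr_gt0.
  have [N _ HN] := cvgr0_norm_lt _ (cvg_expr ex1) _ c0.
  have := HN N (leqnn N) => /= HeN.
  have [s [Ds Hs]] := approx N.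
  exists (\sum_(d <- s) d); split; last by exists s.
  apply: He => /=.
  apply: (le_lt_trans Hs).
  rewrite ger0_norm ?exprn_ge0 ?ltW // in HeN.
  apply: (le_lt_trans (y := e / (`|x| + 1) * `|x|)).
    by rewrite ler_wpM2r // ltW.
  rewrite -[ltRHS](@divfK _ (`|x| + 1)) ?gt_eqF //.
  by rewrite ltr_pM2l // ltrDl.
- move=> x D1x; exact: norm_cvg0 (H1 _ D1x).
- move=> y E2y; rewrite /U; case: pselect => // h.
  case: (cid h) => s [Ds _] /=.
  exact: sum_cvg0 H2 s Ds.
- move=> y E2y; rewrite /U; case: pselect => // h.
  case: (cid h) => s [Ds ys] /=.
  under eq_fun do rewrite iter_sum. rewrite ys.
  exact: (@sum_cvgT _ _ D2 S (fun k => iter (n k) T) H3 s Ds).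
Qed.
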